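(* Let $(U,\tau_R,\rho)$ be a general ordered topological approximation space and $A\subseteq U$. If $A$ is $R$-increasing exact, i.e. $\underline{R}_{Inc}(A)=\overline{R}^{Inc}(A)$, then $A$ is $P$-increasing exact, i.e. $\underline{P}_{Inc}(A)=\overline{P}^{Inc}(A)$. Likewise, if $\underline{R}_{Dec}(A)=\overline{R}^{Dec}(A)$, then $\underline{P}_{Dec}(A)=\overline{P}^{Dec}(A)$.
   Context: A general ordered topological approximation space (GOTAS) is a triple $(U,\tau_R,\rho)$ where $U$ is a non-empty set, $R$ is a binary relation on $U$, $\tau_R$ is a topology on $U$ generated by $R$, and $\rho$ is a partial order on $U$. A subset $A\subseteq U$ is increasing (resp. decreasing) if whenever $a\in A$, $x\in U$ and $a\,\rho\,x$ (resp. $x\,\rho\,a$), then $x\in A$. For $A\subseteq U$: $\underline{R}_{Inc}(A)$ is the greatest subset of $A$ that is both $\tau_R$-open and increasing; $\underline{R}_{Dec}(A)$ is the greatest subset of $A$ that is $\tau_R$-open and decreasing; $\overline{R}^{Inc}(A)$ is the smallest superset of $A$ that is $\tau_R$-closed and increasing; $\overline{R}^{Dec}(A)$ is the smallest superset of $A$ that is $\tau_R$-closed and decreasing. Define $\underline{P}_{Inc}(A)=A\cap\underline{R}_{Inc}(\overline{R}^{Inc}(A))$, $\overline{P}^{Inc}(A)=A\cup\overline{R}^{Inc}(\underline{R}_{Inc}(A))$, $\underline{P}_{Dec}(A)=A\cap\underline{R}_{Dec}(\overline{R}^{Dec}(A))$, $\overline{P}^{Dec}(A)=A\cup\overline{R}^{Dec}(\underline{R}_{Dec}(A))$.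 *)

(* Defs.v *)
From Stdlib Require Import Classical.
Set Implicit Arguments.

Section Defs.
Variable U : Type.

Definition subset (A B : U -> Prop) : Prop := forall x, A x -> B x.

Definition aftset (R : U -> U -> Prop) (x : U) : U -> Prop := fun y => R x y.

(* tau_R: the topology generated by the subbase { xR | x in U }, i.e. the
   smallest family containing the after-sets and closed under finite
   intersections (including the empty one, U) and arbitrary unions. *)
Inductive tauR_open (R : U -> U -> Prop) : (U -> Prop) -> Prop :=
| tauR_sub : forall x, tauR_open R (aftset R x)
| tauR_full : tauR_open R (fun _ => True)
| tauR_inter : forall A B, tauR_open R A -> tauR_open R B ->
    tauR_open R (fun y => A y /\ B y)
| tauR_union : forall (F : (U -> Prop) -> Prop),
    (forall A, F A -> tauR_open R A) ->
    tauR_open R (fun y => exists A, F A /\ A y)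
| tauR_ext : forall A B, tauR_open R A -> (forall y, A y <-> B y) ->
    tauR_open R B.

Definition tauR_closed (R : U -> U -> Prop) (A : U -> Prop) : Prop :=
  tauR_open R (fun y => ~ A y).

Definition partial_order (rho : U -> U -> Prop) : Prop :=
  (forall x, rho x x) /\
  (forall x y, rho x y -> rho y x -> x = y) /\
  (forall x y z, rho x y -> rho y z -> rho x z).

Definition increasing (rho : U -> U -> Prop) (A : U -> Prop) : Prop :=
  forall a x, A a -> rho a x -> A x.
Definition decreasing (rho : U -> U -> Prop) (A : U -> Prop) : Prop :=
  forall a x, A a -> rho x a -> A x.

Definition RlowInc R rho (A : U -> Prop) : U -> Prop :=
  fun x => exists G, tauR_open R G /\ increasing rho G /\ subset G A /\ G x.
Definition RlowDec R rho (A : U -> Prop) : U -> Prop :=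
  fun x => exists G, tauR_open R G /\ decreasing rho G /\ subset G A /\ G x.
Definition RupInc R rho (A : U -> Prop) : U -> Prop :=
  fun x => forall F, tauR_closed R F -> increasing rho F -> subset A F -> F x.
Definition RupDec R rho (A : U -> Prop) : U -> Prop :=
  fun x => forall F, tauR_closed R F -> decreasing rho F -> subset A F -> F x.

Definition PlowInc R rho A : U -> Prop :=
  fun x => A x /\ RlowInc R rho (RupInc R rho A) x.
Definition PupInc R rho A : U -> Prop :=
  fun x => A x \/ RupInc R rho (RlowInc R rho A) x.
Definition PlowDec R rho A : U -> Prop :=
  fun x => A x /\ RlowDec R rho (RupDec R rho A) x.
Definition PupDec R rho A : U -> Prop :=
  fun x => A x \/ RupDec R rho (RlowDec R rho A) x.

Definition set_eq (A B : U -> Prop) : Prop := forall x, A x <-> B x.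
End Defs.

(* Main.v *)
Require Import Defs.

Theorem proposition3p10 (U : Type) (R rho : U -> U -> Prop) (A : U -> Prop) (u0 : U) :
  partial_order rho ->
  (set_eq (RlowInc R rho A) (RupInc R rho A) ->
     set_eq (PlowInc R rho A) (PupInc R rho A)) /\
  (set_eq (RlowDec R rho A) (RupDec R rho A) ->
     set_eq (PlowDec R rho A) (PupDec R rho A)).
Proof.
  intros _. split; intros H x.
  - assert (Hlow : forall y, A y -> RlowInc R rho (RupInc R rho A) y).
    { intros y Ha.
      assert (HL : RlowInc R rho A y).
      { apply H. intros F _ _ HF. apply HF. exact Ha. }
      destruct HL as [G [HG1 [HG2 [HG3 HG4]]]].
      exists G. repeat split; auto.
      intros z Gz F _ _ HF. apply HF, HG3, Gz. }
    split.
    + intros [Ha _]. left. exact Ha.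
    + intros [Ha | Hu].
      * split; auto.
      * assert (HE : RupInc R rho A x).
        { intros F HF1 HF2 HF3. apply Hu; auto.
          intros y [G [_ [_ [HG3 HG4]]]]. apply HF3, HG3, HG4. }
        apply H in HE. destruct HE as [G [_ [_ [HG3 HG4]]]].
        assert (Ha : A x) by (apply HG3, HG4).
        split; auto.
  - assert (Hlow : forall y, A y -> RlowDec R rho (RupDec R rho A) y).
    { intros y Ha.
      assert (HL : RlowDec R rho A y).
      { apply H. intros F _ _ HF. apply HF. exact Ha. }
      destruct HL as [G [HG1 [HG2 [HG3 HG4]]]].
      exists G. repeat split; auto.
      intros z Gz F _ _ HF. apply HF, HG3, Gz. }
    split.
    + intros [Ha _]. left. exact Ha.
    + intros [Ha | Hu].
      * split; auto.
      * assert (HE : RupDec R rho A x).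
        { intros F HF1 HF2 HF3. apply Hu; auto.
          intros y [G [_ [_ [HG3 HG4]]]]. apply HF3, HG3, HG4. }
        apply H in HE. destruct HE as [G [_ [_ [HG3 HG4]]]].
        assert (Ha : A x) by (apply HG3, HG4).
        split; auto.
Qed.
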